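(* Let $A$ be a partial ring. For every $a\in A$, the subset $D(a)$ of $X_A$ is quasi-compact. In particular $X_A$ is quasi-compact.
   Context: A partial ring is a set $A$ with $0$, a set $A_2\subseteq A\times A$ of summable pairs and a partial addition $+\colon A_2\to A$ (with $0$ a unit summable with everything, commutative, and associative in the sense: $(a,b),(a+b,c)\in A_2$ iff $(b,c),(a,b+c)\in A_2$, and then $(a+b)+c=a+(b+c)$), together with a commutative associative multiplication with unit $1$ such that $0\cdot a=0$ and $(a_1,a_2)\in A_2\Rightarrow(a_1x,a_2x)\in A_2$, $(a_1+a_2)x=a_1x+a_2x$. An ideal is a subset $I\ni 0$ closed under sums of pairs in $A_2\cap(I\times I)$ and with $AI\subseteq I$; a prime ideal is an ideal $I\neq A$ with $ab\in I\Rightarrow a\in I$ or $b\in I$. $X_A$ is the set of prime ideals of $A$; for $a\in A$, $D(a)=\{\mathfrak{p}\in X_A: a\notin\mathfrak{p}\}$; $X_A$ carries the topology generated by the sets $D(a)$, $a\in A$. *)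

(* Defs.v *)
From Stdlib Require Import List.

(* The partial addition is encoded as a total function
   [padd] together with the set [summable] = A_2 of summable pairs; the value
   of [padd a b] for non-summable pairs is irrelevant (no axiom constrains it,
   and every notion below only uses sums of summable pairs). *)
Record PartialRing := {
  carrier :> Type;
  pzero : carrier;
  pone : carrier;
  summable : carrier -> carrier -> Prop;
  padd : carrier -> carrier -> carrier;
  pmul : carrier -> carrier -> carrier;
  summable_0 : forall a, summable a pzero;
  padd_0 : forall a, padd a pzero = a;
  summable_comm : forall a b, summable a b -> summable b a;
  padd_comm : forall a b, summable a b -> padd a b = padd b a;
  summable_assoc : forall a b c,
    (summable a b /\ summable (padd a b) c) <->
    (summable b c /\ summable a (padd b c));
  padd_assoc : forall a b c, summable a b -> summable (padd a b) c ->
    padd (padd a b) c = padd a (padd b c);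
  pmul_comm : forall a b, pmul a b = pmul b a;
  pmul_assoc : forall a b c, pmul (pmul a b) c = pmul a (pmul b c);
  pmul_1 : forall a, pmul pone a = a;
  pmul_0 : forall a, pmul pzero a = pzero;
  summable_mul : forall a1 a2 x, summable a1 a2 ->
    summable (pmul a1 x) (pmul a2 x);
  pmul_addl : forall a1 a2 x, summable a1 a2 ->
    pmul (padd a1 a2) x = padd (pmul a1 x) (pmul a2 x)
}.

Section Spec.
Variable A : PartialRing.

Definition is_ideal (I : A -> Prop) : Prop :=
  I (pzero A) /\
  (forall a b, summable A a b -> I a -> I b -> I (padd A a b)) /\
  (forall a x, I x -> I (pmul A a x)).

Definition is_prime (I : A -> Prop) : Prop :=
  is_ideal I /\ (exists a, ~ I a) /\
  (forall a b, I (pmul A a b) -> I a \/ I b).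

Definition XA : Type := { p : A -> Prop | is_prime p }.

Definition D (a : A) : XA -> Prop := fun p => ~ proj1_sig p a.

Inductive Zopen : (XA -> Prop) -> Prop :=
| Zopen_D : forall a, Zopen (D a)
| Zopen_full : Zopen (fun _ => True)
| Zopen_inter : forall U V, Zopen U -> Zopen V -> Zopen (fun x => U x /\ V x)
| Zopen_union : forall F : (XA -> Prop) -> Prop,
    (forall U, F U -> Zopen U) -> Zopen (fun x => exists U, F U /\ U x)
| Zopen_ext : forall U V, Zopen U -> (forall x, U x <-> V x) -> Zopen V.

Definition quasi_compact (K : XA -> Prop) : Prop :=
  forall C : (XA -> Prop) -> Prop,
    (forall U, C U -> Zopen U) ->
    (forall x, K x -> exists U, C U /\ U x) ->
    exists l : list (XA -> Prop),
      (forall U, In U l -> C U) /\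
      (forall x, K x -> exists U, In U l /\ U x).

End Spec.

(* Main.v *)
Require Import Defs.
Set Implicit Arguments.
From Stdlib Require Import List.
From Stdlib Require Import Classical.

Lemma ideal_mulr (A : PartialRing) (I : A -> Prop) x y :
  is_ideal A I -> I x -> I (pmul A x y).
Proof. intros [_ [_ H]] Hx. rewrite pmul_comm. apply H; auto. Qed.

Lemma one_notin (A : PartialRing) (P : A -> Prop) : is_prime A P -> ~ P (pone A).
Proof.
  intros [HI [[a Ha] _]] H1. apply Ha. rewrite <- (pmul_1 A a).
  apply ideal_mulr; auto.
Qed.

Fixpoint pw (A : PartialRing) (a : A) (n : nat) : A :=
  match n with 0 => pone A | S n => pmul A a (pw A a n) end.

Lemma pw_add (A : PartialRing) (a : A) m n :
  pmul A (pw A a m) (pw A a n) = pw A a (m + n).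
Proof.
  induction m; simpl. apply pmul_1. rewrite pmul_assoc, IHm. reflexivity.
Qed.

Lemma pw_prime (A : PartialRing) (P : A -> Prop) (a : A) :
  is_prime A P -> forall n, P (pw A a n) -> P a.
Proof.
  intros HP n; induction n; simpl; intros H.
  - exfalso; exact (one_notin HP H).
  - destruct HP as [_ [_ Hm]]. destruct (Hm _ _ H); auto.
Qed.

Lemma D_mul (A : PartialRing) (p : XA A) b c :
  D A (pmul A b c) p <-> D A b p /\ D A c p.
Proof.
  destruct p as [P HP]; unfold D; simpl. split.
  - intros H; split; intro h; apply H.
    + apply ideal_mulr; auto. apply HP.
    + rewrite pmul_comm. apply ideal_mulr; auto. apply HP.
  - intros [h1 h2] h. destruct HP as [_ [_ Hm]]. destruct (Hm _ _ h); auto.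
Qed.

Lemma basis (A : PartialRing) U : Zopen A U ->
  forall p, U p -> exists b, D A b p /\ forall q, D A b q -> U q.
Proof.
  induction 1.
  - intros p Hp; exists a; auto.
  - intros p _; exists (pone A); split; auto.
    destruct p as [P HP]; unfold D; simpl. apply one_notin; auto.
  - intros p [Up Vp]. destruct (IHZopen1 p Up) as [b [Hb Hb']].
    destruct (IHZopen2 p Vp) as [c [Hc Hc']].
    exists (pmul A b c). split. apply D_mul; auto.
    intros q Hq. apply D_mul in Hq. destruct Hq; auto.
  - intros p [U0 [FU Up]]. destruct (H0 U0 FU p Up) as [b [Hb Hb']].
    exists b; split; auto. intros q Hq. exists U0; auto.
  - intros p Vp. apply H0 in Vp. destruct (IHZopen p Vp) as [b [Hb Hb']].
    exists b; split; auto. intros q Hq; apply H0; auto.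
Qed.

Inductive Gen (A : PartialRing) (B : A -> Prop) : A -> Prop :=
| gen_base : forall b, B b -> Gen A B b
| gen_zero : Gen A B (pzero A)
| gen_add : forall x y, summable A x y -> Gen A B x -> Gen A B y -> Gen A B (padd A x y)
| gen_mul : forall c x, Gen A B x -> Gen A B (pmul A c x).

Lemma Gen_ideal (A : PartialRing) B : is_ideal A (Gen A B).
Proof. split; [|split]; intros. apply gen_zero. apply gen_add; auto. apply gen_mul; auto. Qed.

Lemma Gen_mono (A : PartialRing) (B B' : A -> Prop) :
  (forall x, B x -> B' x) -> forall z, Gen A B z -> Gen A B' z.
Proof. intros H z; induction 1. apply gen_base; auto. apply gen_zero. apply gen_add; auto. apply gen_mul; auto. Qed.

Lemma Gen_sub (A : PartialRing) (P B : A -> Prop) :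
  is_ideal A P -> (forall x, B x -> P x) -> forall z, Gen A B z -> P z.
Proof.
  intros [H0 [H1 H2]] HB z; induction 1; auto.
Qed.

Lemma Gen_finite (A : PartialRing) (B : A -> Prop) z : Gen A B z ->
  exists l, (forall b, In b l -> B b) /\ Gen A (fun b => In b l) z.
Proof.
  induction 1.
  - exists (b :: nil); split. intros b' [->|[]]; auto. apply gen_base; simpl; auto.
  - exists nil; split. intros b []. apply gen_zero.
  - destruct IHGen1 as [l1 [K1 G1]]. destruct IHGen2 as [l2 [K2 G2]].
    exists (l1 ++ l2); split.
    + intros b Hb; apply in_app_or in Hb; destruct Hb; auto.
    + apply gen_add; auto.
      * revert G1; apply Gen_mono; intros; apply in_or_app; auto.
      * revert G2; apply Gen_mono; intros; apply in_or_app; auto.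
  - destruct IHGen as [l [K1 G1]]. exists l; split; auto. apply gen_mul; auto.
Qed.

Lemma colon_ideal (A : PartialRing) (P : A -> Prop) y :
  is_ideal A P -> is_ideal A (fun z => P (pmul A z y)).
Proof.
  intros [H0 [H1 H2]]. split; [|split].
  - rewrite pmul_0; auto.
  - intros a b Hs Ha Hb. rewrite pmul_addl; auto. apply H1; auto.
    apply summable_mul; auto.
  - intros a x Hx. rewrite pmul_assoc. auto.
Qed.

Lemma ideal_ext (A : PartialRing) (I J : A -> Prop) :
  is_ideal A I -> (forall x, I x <-> J x) -> is_ideal A J.
Proof.
  intros [H0 [H1 H2]] E. split; [|split].
  - apply E; auto.
  - intros a b Hs Ha Hb; apply E; apply H1; auto; apply E; auto.
  - intros a x Hx; apply E; apply H2; apply E; auto.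
Qed.

From mathcomp Require Import boolp classical_sets.

Lemma chain_ok (A : PartialRing) (I : A -> Prop) (a : A) :
  is_ideal A I -> (forall n, ~ I (pw A a n)) ->
  forall F : (A -> Prop) -> Prop,
  (forall J, F J -> is_ideal A (fun x => J x \/ I x) /\
                    forall n, ~ (J (pw A a n) \/ I (pw A a n))) ->
  (forall s t, F s -> F t -> (forall x, s x -> t x) \/ (forall x, t x -> s x)) ->
  is_ideal A (fun x => (exists2 X, F X & X x) \/ I x) /\
  forall n, ~ ((exists2 X, F X & X (pw A a n)) \/ I (pw A a n)).
Proof.
  intros HI Hd F FP Ftot. split.
  - split; [|split].
    + right; apply HI.
    + intros x y Hs Hx Hy.
      destruct Hx as [[X FX Xx]|Ix]; destruct Hy as [[Y FY Yy]|Iy].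
      * destruct (Ftot X Y FX FY) as [h|h].
        -- destruct (proj1 (FP Y FY)) as [_ [Hsum _]].
           destruct (Hsum x y Hs (or_introl (h x Xx)) (or_introl Yy)) as [h'|h'].
           left; exists Y; auto. right; auto.
        -- destruct (proj1 (FP X FX)) as [_ [Hsum _]].
           destruct (Hsum x y Hs (or_introl Xx) (or_introl (h y Yy))) as [h'|h'].
           left; exists X; auto. right; auto.
      * destruct (proj1 (FP X FX)) as [_ [Hsum _]].
        destruct (Hsum x y Hs (or_introl Xx) (or_intror Iy)) as [h'|h'].
        left; exists X; auto. right; auto.
      * destruct (proj1 (FP Y FY)) as [_ [Hsum _]].
        destruct (Hsum x y Hs (or_intror Ix) (or_introl Yy)) as [h'|h'].
        left; exists Y; auto. right; auto.
      * right; apply HI; auto.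
    + intros c x [[X FX Xx]|Ix].
      * destruct (proj1 (FP X FX)) as [_ [_ Hm]].
        destruct (Hm c x (or_introl Xx)) as [h'|h'].
        left; exists X; auto. right; auto.
      * right; apply HI; auto.
  - intros n [[X FX Xx]|Ix].
    + apply (proj2 (FP X FX) n); left; auto.
    + apply (Hd n Ix).
Qed.

Lemma exists_max (A : PartialRing) (I : A -> Prop) (a : A) :
  is_ideal A I -> (forall n, ~ I (pw A a n)) ->
  exists M, is_ideal A M /\ (forall x, I x -> M x) /\ (forall n, ~ M (pw A a n)) /\
   (forall N, is_ideal A N -> (forall x, M x -> N x) -> (forall n, ~ N (pw A a n)) ->
      forall x, N x -> M x).
Proof.
  intros HI Hd.
  pose (Pzz := fun J : A -> Prop => is_ideal A (fun x => J x \/ I x) /\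
                    forall n, ~ (J (pw A a n) \/ I (pw A a n))).
  destruct (@Zorn_bigcup A Pzz) as [M [PM Mmax]].
  - intros F FP Ftot. exact (@chain_ok A I a HI Hd F FP Ftot).
  - exists (fun x => M x \/ I x). split; [apply PM|split; [|split]].
    + intros x Ix; right; auto.
    + apply PM.
    + intros N HN MN DN x Nx.
      destruct (Classical_Prop.classic (M x \/ I x)) as [h|h]; auto. exfalso.
      apply (Mmax N).
      * split. intros t Mt; apply MN; left; auto.
        intros NM. apply h. left. apply NM; auto.
      * split.
        -- apply (@ideal_ext A N _ HN).
           intros y; split; [intros; left; auto|].
           intros [h1|h1]; auto.
        -- intros n [h'|h']. apply (DN n h'). apply (DN n). apply MN; right; auto.
Qed.

Lemma exists_prime (A : PartialRing) (I : A -> Prop) (a : A) :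
  is_ideal A I -> (forall n, ~ I (pw A a n)) ->
  exists P, is_prime A P /\ (forall x, I x -> P x) /\ (forall n, ~ P (pw A a n)).
Proof.
  intros HI Hd. destruct (@exists_max A I a HI Hd) as [M [HM [IM [DM Mx]]]].
  exists M; split; auto. split; auto. split.
  { exists (pone A). exact (DM 0). }
  intros x y Hxy. apply NNPP; intros Hn. apply not_or_and in Hn. destruct Hn as [nx ny].
  destruct (Classical_Prop.classic (exists n, M (pmul A (pw A a n) x))) as [[n Hn]|Hn].
  - apply nx. apply (Mx (fun z => M (pmul A z (pw A a n)))).
    + apply colon_ideal; auto.
    + intros z Mz; apply ideal_mulr; auto.
    + intros m h. rewrite pw_add in h. apply (DM _ h).
    + rewrite pmul_comm; auto.
  - apply ny. apply (Mx (fun z => M (pmul A z x))).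
    + apply colon_ideal; auto.
    + intros z Mz; apply ideal_mulr; auto.
    + intros m h. apply Hn. exists m; auto.
    + rewrite pmul_comm; auto.
Qed.

Lemma cover_finite (A : PartialRing) (a : A) (B : A -> Prop) :
  (forall p : XA A, D A a p -> exists b, B b /\ D A b p) ->
  exists l, (forall b, In b l -> B b) /\
    (forall p, D A a p -> exists b, In b l /\ D A b p).
Proof.
  intros Hc.
  destruct (Classical_Prop.classic (exists n, Gen A B (pw A a n))) as [[n Hn]|Hn].
  - destruct (Gen_finite Hn) as [l [Hl Hg]]. exists l; split; auto.
    intros p Hp. destruct (Classical_Prop.classic (exists b, In b l /\ D A b p)) as [h|h]; auto.
    exfalso. apply Hp. destruct p as [P HP]; simpl in *.
    apply (@pw_prime A P a HP n). apply (@Gen_sub A P (fun b => In b l) (proj1 HP)); auto.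
    intros x Hx. apply NNPP; intro hx. apply h. exists x; split; auto.
  - destruct (@exists_prime A (Gen A B) a (@Gen_ideal A B)) as [P [HP [IP DP]]].
    { intros n h; apply Hn; exists n; auto. }
    pose (p := exist _ P HP : XA A).
    assert (Dp : D A a p).
    { unfold D; simpl. intros h. apply (DP 1). simpl. rewrite pmul_comm.
      apply (proj2 (proj2 (proj1 HP))); auto. }
    destruct (Hc p Dp) as [b [Bb Db]]. exfalso. apply Db; simpl. apply IP. apply gen_base; auto.
Qed.

Lemma choose_list (A : PartialRing) (C : (XA A -> Prop) -> Prop) :
  forall l : list A, (forall b, In b l -> exists U, C U /\ forall q, D A b q -> U q) ->
  exists lu, (forall U, In U lu -> C U) /\
    forall b, In b l -> exists U, In U lu /\ forall q, D A b q -> U q.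
Proof.
  induction l as [|b l IH]; intros H.
  - exists nil; split. intros U []. intros b [].
  - destruct IH as [lu [H1 H2]]. { intros; apply H; right; auto. }
    destruct (H b (or_introl eq_refl)) as [U [CU HU]].
    exists (U :: lu); split.
    + intros U' [<-|h]; auto.
    + intros b' [<-|h]. exists U; split; auto. left; auto.
      destruct (H2 b' h) as [U' [h1 h2]]. exists U'; split; auto. right; auto.
Qed.

Lemma qc_D (A : PartialRing) (a : A) : quasi_compact A (D A a).
Proof.
  intros C HC Hcov.
  destruct (@cover_finite A a (fun b => exists U, C U /\ forall q, D A b q -> U q))
    as [l [Hl Hlc]].
  - intros p Hp. destruct (Hcov p Hp) as [U [CU Up]].
    destruct (basis (HC U CU) p Up) as [b [Db Hb]].
    exists b; split; auto. exists U; auto.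
  - destruct (@choose_list A C l Hl) as [lu [H1 H2]].
    exists lu; split; auto. intros x Kx.
    destruct (Hlc x Kx) as [b [Hb Db]]. destruct (H2 b Hb) as [U [h1 h2]].
    exists U; auto.
Qed.

Theorem mainTheorem10 (A : PartialRing) :
  (forall a : A, quasi_compact A (D A a)) /\ quasi_compact A (fun _ => True).
Proof.
  split. apply qc_D.
  intros C HC Hcov. destruct (@qc_D A (pone A) C HC) as [l [H1 H2]].
  - intros x _; apply Hcov; auto.
  - exists l; split; auto. intros x _. apply H2.
    destruct x as [P HP]; unfold D; simpl. apply one_notin; auto.
Qed.
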